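(* Let $\alpha,\beta,p\in\mathbb{C}$, $s^2=\alpha^2-p^2$, $t^2=\beta^2-p^2$, and let $\rho\neq 0$ be a constant. Suppose $\varphi_1,\varphi_2:\mathbb{Z}^2\to\mathbb{C}\setminus\{0\}$ satisfy, for all $n,m\in\mathbb{Z}$, the discrete Abel relations $$\varphi_1\widetilde{\varphi}_2-\varphi_2\widetilde{\varphi}_1=\varphi_1\widehat{\varphi}_2-\varphi_2\widehat{\varphi}_1=\rho\,s^{2n}t^{2m}.$$ Then each of $\varphi=\varphi_1$ and $\varphi=\varphi_2$ satisfies the lattice eigenfunction KdV (leKdV) equation $$(\alpha^2-p^2)\,\varphi\widehat{\varphi}-(\beta^2-p^2)\,\varphi\widetilde{\varphi}-\widetilde{\varphi}\,\widehat{\widetilde{\varphi}}+\widehat{\varphi}\,\widehat{\widetilde{\varphi}}=0 .$$ In other words, these relations define an auto-Bäcklund transformation between $\varphi_1$ and $\varphi_2$ as solutions of the leKdV equation. (In particular this applies to two linearly independent solutions of the Lax pair $\widetilde{\widetilde{\varphi}}+h\widetilde{\varphi}+\alpha^2\varphi=p^2\varphi$, $\widehat{\varphi}=\widetilde{\varphi}-g\varphi$ with $\widehat h-\widetilde h=\widetilde{\widetilde g}-g$, $(h+\widetilde g)g=\beta^2-\alpha^2$, which satisfy these relations.)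
   Context: Shift notation: for a function $f$ on $\mathbb{Z}^2$ (variables $n,m$), $\widetilde f(n,m)=f(n+1,m)$, $\widehat f(n,m)=f(n,m+1)$, and $\widehat{\widetilde f}(n,m)=f(n+1,m+1)$. *)

(* Defs.v *)
From HB Require Import structures.
From mathcomp Require Import all_boot all_order all_algebra.
From mathcomp Require Import complex.
From mathcomp Require Import Rstruct.
Set Implicit Arguments. Unset Strict Implicit. Unset Printing Implicit Defensive.
Import Order.TTheory GRing.Theory Num.Theory.

Definition CC : Type := complex Rdefinitions.R.

(* Shift notation on Z^2: tilde = shift in n, hat = shift in m. *)
Definition shn {T} (f : int -> int -> T) : int -> int -> T := fun n m => f (n + 1)%R m.
Definition shm {T} (f : int -> int -> T) : int -> int -> T := fun n m => f n (m + 1)%R.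

(* Main.v *)
Require Import Defs.
From HB Require Import structures.
From mathcomp Require Import all_boot all_order all_algebra.
From mathcomp Require Import complex.
From mathcomp Require Import Rstruct.
From mathcomp Require Import ring.
Import Order.TTheory GRing.Theory Num.Theory.
Local Open Scope ring_scope.

Lemma key (F : fieldType) (a b at1 bt ah bh ath bth W s2 t2 : F) :
  W != 0 ->
  a*bt - b*at1 = W -> a*bh - b*ah = W ->
  at1*bth - bt*ath = s2*W -> ah*bth - bh*ath = t2*W ->
  s2*a*ah - t2*a*at1 - at1*ath + ah*ath = 0.
Proof.
move=> W0 e1 e2 e3 e4.
set X := at1*bh - ah*bt.
have E : ath*X = W*(s2*ah - t2*at1).
  apply/eqP; rewrite -subr_eq0; apply/eqP.
  have -> : ath*X - W*(s2*ah - t2*at1)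
     = ah*((at1*bth - bt*ath) - s2*W) - at1*((ah*bth - bh*ath) - t2*W)
    by rewrite /X; ring.
  by rewrite e3 e4 !subrr !mulr0 subrr.
have E2 : a*X = W*(at1 - ah).
  apply/eqP; rewrite -subr_eq0; apply/eqP.
  have -> : a*X - W*(at1 - ah)
     = at1*((a*bh - b*ah) - W) - ah*((a*bt - b*at1) - W)
    by rewrite /X; ring.
  by rewrite e1 e2 !subrr !mulr0 subrr.
have : W * (s2*a*ah - t2*a*at1 - at1*ath + ah*ath) = 0.
  have -> : W * (s2*a*ah - t2*a*at1 - at1*ath + ah*ath)
     = a*(W*(s2*ah - t2*at1)) - ath*(W*(at1 - ah)) by ring.
  by rewrite -E -E2; ring.
by move/eqP; rewrite mulf_eq0 (negbTE W0) /= => /eqP.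
Qed.

Theorem proposition3p1
  (alpha beta p s t rho : CC)
  (hs : s ^+ 2 = alpha ^+ 2 - p ^+ 2) (ht : t ^+ 2 = beta ^+ 2 - p ^+ 2)
  (hs0 : s != 0) (ht0 : t != 0) (hrho : rho != 0)
  (phi1 phi2 : int -> int -> CC)
  (h1 : forall n m, phi1 n m != 0) (h2 : forall n m, phi2 n m != 0)
  (hab1 : forall n m : int,
     phi1 n m * shn phi2 n m - phi2 n m * shn phi1 n m
       = rho * s ^ (2 * n) * t ^ (2 * m))
  (hab2 : forall n m : int,
     phi1 n m * shm phi2 n m - phi2 n m * shm phi1 n m
       = rho * s ^ (2 * n) * t ^ (2 * m)) :
  forall phi, (phi = phi1 \/ phi = phi2) ->
  forall n m : int,
    (alpha ^+ 2 - p ^+ 2) * phi n m * shm phi n m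
    - (beta ^+ 2 - p ^+ 2) * phi n m * shn phi n m
    - shn phi n m * shn (shm phi) n m
    + shm phi n m * shn (shm phi) n m = 0.
Proof.
move=> phi hphi n m.
set W := rho * s ^ (2 * n) * t ^ (2 * m).
have W0 : W != 0.
  by rewrite /W !mulf_neq0 // expfz_neq0.
have Wn : rho * s ^ (2 * (n + 1)) * t ^ (2 * m) = s ^+ 2 * W.
  by rewrite mulrDr mulr1 expfzDr // /W; ring.
have Wm : rho * s ^ (2 * n) * t ^ (2 * (m + 1)) = t ^+ 2 * W.
  by rewrite mulrDr mulr1 expfzDr // /W; ring.
have e3 := hab2 (n + 1) m. rewrite Wn in e3.
have e4 := hab1 n (m + 1). rewrite Wm in e4.
have e1 := hab1 n m. have e2 := hab2 n m.
rewrite /shn /shm /= in e1 e2 e3 e4 *.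
rewrite -hs -ht -/W in e1 e2 *.
case: hphi => ->.
  have := @key _ (phi1 n m) (phi2 n m) (phi1 (n+1) m) (phi2 (n+1) m) (phi1 n (m+1)) (phi2 n (m+1)) (phi1 (n+1) (m+1)) (phi2 (n+1) (m+1)) W (s^+2) (t^+2) W0 e1 e2 e3 e4.
  by [].
have f1 : phi2 n m * phi1 (n+1) m - phi1 n m * phi2 (n+1) m = - W.
  by rewrite -e1 opprB.
have f2 : phi2 n m * phi1 n (m+1) - phi1 n m * phi2 n (m+1) = - W.
  by rewrite -e2 opprB.
have f3 : phi2 (n+1) m * phi1 (n+1) (m+1) - phi1 (n+1) m * phi2 (n+1) (m+1) = s ^+ 2 * - W.
  by rewrite mulrN -e3 opprB.
have f4 : phi2 n (m+1) * phi1 (n+1) (m+1) - phi1 n (m+1) * phi2 (n+1) (m+1) = t ^+ 2 * - W.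
  by rewrite mulrN -e4 opprB.
have W0' : - W != 0 by rewrite oppr_eq0.
have := @key _ (phi2 n m) (phi1 n m) (phi2 (n+1) m) (phi1 (n+1) m) (phi2 n (m+1)) (phi1 n (m+1)) (phi2 (n+1) (m+1)) (phi1 (n+1) (m+1)) (-W) (s^+2) (t^+2) W0' f1 f2 f3 f4.
by [].
Qed.
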